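(* Let $m,k,\ell,q,u,w$ be nonnegative integers with $u\le m$ and $m+(k+2\ell)q = u+(k+2\ell)w$, and set $n = m+(k+2\ell)q$. Let $g\colon \mathbb{C}^m\to\mathbb{C}^u$ and $p\colon \mathbb{C}^{m+q}\to\mathbb{C}^w$ be polynomial maps with real coefficients, and define $f\colon\mathbb{C}^n\to\mathbb{C}^n$ by $$f(a,b_1,\dots,b_k,c_1,\dots,c_\ell,d_1,\dots,d_\ell) = \big(g(a),\ p(a,b_1),\dots,p(a,b_k),\ p(a,c_1),\dots,p(a,c_\ell),\ p(a,d_1),\dots,p(a,d_\ell)\big),$$ where $a\in\mathbb{C}^m$ and $b_r,c_s,d_t\in\mathbb{C}^q$. Then the set $$V=\left\{(a,b_1,\dots,b_k,c_1,\dots,c_\ell,\overline{c_1},\dots,\overline{c_\ell}) : a\in\mathbb{R}^m,\ b_i\in\mathbb{R}^q,\ c_j\in\mathbb{C}^q\right\}\subset\mathbb{C}^n$$ is Newton invariant with respect to $f$, where $\overline{\,\cdot\,}$ denotes (coordinatewise) complex conjugation.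
   Context: For an analytic map $f\colon\mathbb{C}^n\to\mathbb{C}^n$ with Jacobian matrix $Df(x)$, the Newton iteration map $N_f\colon\mathbb{C}^n\to\mathbb{C}^n$ is defined by $N_f(x)=x-Df(x)^{-1}f(x)$ if $Df(x)$ is invertible and $N_f(x)=x$ otherwise; $N_f^k$ denotes the $k$-fold composition of $N_f$. A set $V\subset\mathbb{C}^n$ is called Newton invariant with respect to $f$ if $N_f(v)\in V$ for every $v\in V$, and $\lim_{k\to\infty}N_f^k(v)\in V$ for every $v\in V$ for which this limit exists. *)

(* Defs.v *)
From Stdlib Require Import Reals ClassicalEpsilon.
From mathcomp Require Import ssreflect ssrfun ssrbool eqtype ssrnat seq div fintype.




Definition C : Type := (R * R)%type.
Definition RtoC (r : R) : C := (r, 0%R).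
Definition C0 : C := RtoC 0%R.
Definition C1 : C := RtoC 1%R.
Definition Cadd (x y : C) : C := (fst x + fst y, snd x + snd y)%R.
Definition Copp (x : C) : C := (- fst x, - snd x)%R.
Definition Csub (x y : C) : C := Cadd x (Copp y).
Definition Cmul (x y : C) : C :=
  (fst x * fst y - snd x * snd y, fst x * snd y + snd x * fst y)%R.
Definition Cconj (x : C) : C := (fst x, - snd x)%R.
Definition Cnorm (x : C) : R := sqrt (fst x * fst x + snd x * snd x)%R.

Inductive pexpr (V : Type) : Type :=
| PVar (v : V)
| PConst (r : R)
| PAdd (e1 e2 : pexpr V)
| PMul (e1 e2 : pexpr V).
Arguments PMul {V} e1 e2.
Arguments PAdd {V} e1 e2.
Arguments PConst {V} r.
Arguments PVar {V} v.

Fixpoint peval {V : Type} (env : V -> C) (e : pexpr V) : C :=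
  match e with
  | PVar v => env v
  | PConst r => RtoC r
  | PAdd e1 e2 => Cadd (peval env e1) (peval env e2)
  | PMul e1 e2 => Cmul (peval env e1) (peval env e2)
  end.

Fixpoint prename {V W : Type} (h : V -> W) (e : pexpr V) : pexpr W :=
  match e with
  | PVar v => PVar (h v)
  | PConst r => PConst r
  | PAdd e1 e2 => PAdd (prename h e1) (prename h e2)
  | PMul e1 e2 => PMul (prename h e1) (prename h e2)
  end.

Fixpoint pderiv (e : pexpr nat) (j : nat) : pexpr nat :=
  match e with
  | PVar v => PConst (if v == j then 1%R else 0%R)
  | PConst _ => PConst 0%R
  | PAdd e1 e2 => PAdd (pderiv e1 j) (pderiv e2 j)
  | PMul e1 e2 => PAdd (PMul (pderiv e1 j) e2) (PMul e1 (pderiv e2 j))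
  end.

Definition ext (n : nat) (x : 'I_n -> C) : nat -> C :=
  fun i => match (insub i : option 'I_n) with Some o => x o | None => C0 end.
Arguments ext {n} x i.

Definition pm_eval (n : nat) (F : 'I_n -> pexpr nat) (x : 'I_n -> C) : 'I_n -> C :=
  fun i => peval (ext x) (F i).
Arguments pm_eval {n} F x i.

Definition jac (n : nat) (F : 'I_n -> pexpr nat) (x : 'I_n -> C)
  : 'I_n -> 'I_n -> C :=
  fun i j => peval (ext x) (pderiv (F i) (nat_of_ord j)).
Arguments jac {n} F x i j.

Definition Csum (s : seq C) : C := foldr Cadd C0 s.

Definition mv (n : nat) (A : 'I_n -> 'I_n -> C) (v : 'I_n -> C) : 'I_n -> C :=
  fun i => Csum [seq Cmul (A i j) (v j) | j <- enum 'I_n].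
Arguments mv {n} A v i.

Definition matmul (n : nat) (A B : 'I_n -> 'I_n -> C) : 'I_n -> 'I_n -> C :=
  fun i k => Csum [seq Cmul (A i j) (B j k) | j <- enum 'I_n].
Arguments matmul {n} A B i k.

Definition idmat (n : nat) : 'I_n -> 'I_n -> C :=
  fun i j => if i == j then C1 else C0.

Definition is_inverse (n : nat) (A B : 'I_n -> 'I_n -> C) : Prop :=
  matmul A B = @idmat n /\ matmul B A = @idmat n.
Arguments is_inverse {n} A B.

Definition invertible (n : nat) (A : 'I_n -> 'I_n -> C) : Prop :=
  exists B, is_inverse A B.
Arguments invertible {n} A.

Definition newton (n : nat) (F : 'I_n -> pexpr nat) (x : 'I_n -> C) : 'I_n -> C :=
  match excluded_middle_informative (invertible (jac F x)) with
  | left _ =>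
      let B := epsilon (inhabits (fun _ _ => C0)) (is_inverse (jac F x)) in
      fun i => Csub (x i) (mv B (pm_eval F x) i)
  | right _ => x
  end.
Arguments newton {n} F x i.

Definition converges (n : nat) (s : nat -> 'I_n -> C) (L : 'I_n -> C) : Prop :=
  forall eps : R, (eps > 0)%R ->
    exists N : nat, forall t : nat, (N <= t)%N ->
      forall i : 'I_n, (Cnorm (Csub (s t i) (L i)) < eps)%R.
Arguments converges {n} s L.

Definition newton_invariant (n : nat) (F : 'I_n -> pexpr nat)
  (V : ('I_n -> C) -> Prop) : Prop :=
  (forall v, V v -> V (newton F v)) /\
  (forall v L, V v -> converges (fun t => iter t (newton F) v) L -> V L).
Arguments newton_invariant {n} F V.

(* coordinates of x in C^n, n = m + (k+2l)q, are laid out as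
   (a, b_0..b_{k-1}, c_0..c_{l-1}, d_0..d_{l-1}); block r (0 <= r < k+2l)
   occupies indices m + r*q, ..., m + r*q + q - 1. *)

(* variable renaming sending the variables (a, y) of p to (a, block r) *)
Definition blockren (m q r : nat) (v : 'I_(m + q)) : nat :=
  if (nat_of_ord v < m)%N then nat_of_ord v else (m + r * q + (nat_of_ord v - m))%N.

(* components of f: first u are g(a), then block r of w outputs is p(a, block r) *)
Definition fF (m k l q u w : nat) (g : 'I_u -> pexpr 'I_m)
  (p : 'I_w -> pexpr 'I_(m + q)) : 'I_(m + (k + 2 * l) * q) -> pexpr nat :=
  fun o =>
    match (insub (nat_of_ord o) : option 'I_u) with
    | Some o' => prename (fun v : 'I_m => nat_of_ord v) (g o')
    | None =>
        let o1 := (nat_of_ord o - u)%N in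
        match (insub (o1 %% w)%N : option 'I_w) with
        | Some j => prename (blockren m q (o1 %/ w)%N) (p j)
        | None => PConst 0%R
        end
    end.

Definition assemble (m k l q : nat) (a : nat -> R) (b : nat -> nat -> R)
  (c : nat -> nat -> C) (i : nat) : C :=
  if (i < m)%N then RtoC (a i)
  else
    let i1 := (i - m)%N in
    let r := (i1 %/ q)%N in
    let j := (i1 %% q)%N in
    if (r < k)%N then RtoC (b r j)
    else if (r < k + l)%N then c (r - k)%N j
    else Cconj (c (r - k - l)%N j).

Definition Vset (m k l q : nat) (x : 'I_(m + (k + 2 * l) * q) -> C) : Prop :=
  exists (a : nat -> R) (b : nat -> nat -> R) (c : nat -> nat -> C),
    forall i : 'I_(m + (k + 2 * l) * q), x i = assemble m k l q a b c (nat_of_ord i).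

(* Main.v *)
Require Import Defs.
Set Warnings "-notation-overridden".
From Stdlib Require Import Reals Lra FunctionalExtensionality.
From HB Require Import structures.
From mathcomp Require Import ssreflect ssrfun ssrbool eqtype ssrnat seq div fintype bigop.
From Stdlib Require Import ClassicalEpsilon.
From mathcomp Require Import zify.
Notation CC := Defs.C.

Lemma Ceq (x y : CC) : fst x = fst y -> snd x = snd y -> x = y.
Proof. by case: x => ??; case: y => ?? /= -> ->. Qed.

Ltac Csolve := intros; repeat match goal with z : CC |- _ => destruct z end;
  apply Ceq; simpl; ring.

Lemma CaddA : associative Cadd. Proof. move=> *; Csolve. Qed.
Lemma CaddC : commutative Cadd. Proof. move=> *; Csolve. Qed.
Lemma Cadd0l : left_id C0 Cadd. Proof. move=> *; unfold C0, RtoC; Csolve. Qed.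
HB.instance Definition _ := Monoid.isComLaw.Build CC C0 Cadd CaddA CaddC Cadd0l.

Definition Ssum {n : nat} (F : 'I_n -> CC) := \big[Cadd/C0]_(j < n) F j.

Lemma Csum_S n (F : 'I_n -> CC) : Csum [seq F j | j <- enum 'I_n] = Ssum F.
Proof.
rewrite /Ssum -big_enum /=.
elim: (enum _) => [|a s IH] /=; first by rewrite big_nil.
by rewrite big_cons IH.
Qed.

Lemma CmulA x y z : Cmul x (Cmul y z) = Cmul (Cmul x y) z. Proof. Csolve. Qed.
Lemma CmulC x y : Cmul x y = Cmul y x. Proof. Csolve. Qed.
Lemma CmulDr x y z : Cmul x (Cadd y z) = Cadd (Cmul x y) (Cmul x z). Proof. Csolve. Qed.
Lemma CmulDl x y z : Cmul (Cadd y z) x = Cadd (Cmul y x) (Cmul z x). Proof. Csolve. Qed.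
Lemma Cmul0r x : Cmul x C0 = C0. Proof. unfold C0, RtoC; Csolve. Qed.
Lemma Cmul0l x : Cmul C0 x = C0. Proof. unfold C0, RtoC; Csolve. Qed.
Lemma Cmul1r x : Cmul x Defs.C1 = x. Proof. unfold Defs.C1, RtoC; Csolve. Qed.
Lemma Cmul1l x : Cmul Defs.C1 x = x. Proof. unfold Defs.C1, RtoC; Csolve. Qed.
Lemma Cadd0r x : Cadd x C0 = x. Proof. unfold C0, RtoC; Csolve. Qed.
Lemma CconjD x y : Cconj (Cadd x y) = Cadd (Cconj x) (Cconj y). Proof. unfold Cconj; Csolve. Qed.
Lemma CconjM x y : Cconj (Cmul x y) = Cmul (Cconj x) (Cconj y). Proof. unfold Cconj; Csolve. Qed.
Lemma CconjB x y : Cconj (Csub x y) = Csub (Cconj x) (Cconj y). Proof. unfold Cconj, Csub, Copp; Csolve. Qed.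
Lemma CconjK x : Cconj (Cconj x) = x. Proof. unfold Cconj; Csolve. Qed.
Lemma Cconj0 : Cconj C0 = C0. Proof. unfold Cconj, C0, RtoC; Csolve. Qed.
Lemma Cconj1 : Cconj Defs.C1 = Defs.C1. Proof. unfold Cconj, Defs.C1, RtoC; Csolve. Qed.
Lemma CconjR r : Cconj (RtoC r) = RtoC r. Proof. unfold Cconj, RtoC; Csolve. Qed.

Lemma S_mull n c (F : 'I_n -> CC) : Cmul c (Ssum F) = Ssum (fun j => Cmul c (F j)).
Proof. rewrite /Ssum; apply: (big_morph (Cmul c)) => [x y|]; [exact: CmulDr | exact: Cmul0r]. Qed.
Lemma S_mulr n c (F : 'I_n -> CC) : Cmul (Ssum F) c = Ssum (fun j => Cmul (F j) c).
Proof. rewrite /Ssum; apply: (big_morph (fun x => Cmul x c)) => [x y|]; [exact: CmulDl | exact: Cmul0l]. Qed.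
Lemma S_conj n (F : 'I_n -> CC) : Cconj (Ssum F) = Ssum (fun j => Cconj (F j)).
Proof. rewrite /Ssum; apply: (big_morph Cconj) => [x y|]; [exact: CconjD | exact: Cconj0]. Qed.
Lemma S_ext n (F G : 'I_n -> CC) : (forall j, F j = G j) -> Ssum F = Ssum G.
Proof. move=> h; rewrite /Ssum; apply: eq_bigr => j _; exact: h. Qed.
Lemma S_reindex n (h : 'I_n -> 'I_n) (F : 'I_n -> CC) : injective h -> Ssum F = Ssum (fun j => F (h j)).
Proof. move=> hi; rewrite /Ssum; exact: reindex_inj. Qed.
Lemma S_idr n (A : 'I_n -> CC) l : Ssum (fun j => Cmul (A j) (idmat n j l)) = A l.
Proof.
rewrite /Ssum (bigD1 l) //= /idmat eqxx Cmul1r big1 ?Cadd0r // => j /negbTE ->.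
exact: Cmul0r.
Qed.
Lemma S_idl n (A : 'I_n -> CC) l : Ssum (fun j => Cmul (idmat n l j) (A j)) = A l.
Proof.
rewrite /Ssum (bigD1 l) //= /idmat eqxx Cmul1l big1 ?Cadd0r // => j; rewrite eq_sym => /negbTE ->.
exact: Cmul0l.
Qed.
Lemma S_assoc n (A B D : 'I_n -> 'I_n -> CC) i l :
  Ssum (fun j => Cmul (A i j) (Ssum (fun k => Cmul (B j k) (D k l)))) =
  Ssum (fun k => Cmul (Ssum (fun j => Cmul (A i j) (B j k))) (D k l)).
Proof.
rewrite (@S_ext _ _ (fun j => Ssum (fun k => Cmul (Cmul (A i j) (B j k)) (D k l)))); last first.
  by move=> j; rewrite S_mull; apply: S_ext => k; rewrite CmulA.
rewrite /Ssum exchange_big /=; apply: eq_bigr => k _.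
by rewrite -/(Ssum _) S_mulr.
Qed.

Lemma matmulE n (A B : 'I_n -> 'I_n -> CC) i k : matmul A B i k = Ssum (fun j => Cmul (A i j) (B j k)).
Proof. by rewrite /matmul Csum_S. Qed.

Lemma inv_unique n (A B D : 'I_n -> 'I_n -> CC) :
  matmul B A = idmat n -> matmul A D = idmat n -> forall i l, B i l = D i l.
Proof.
move=> hBA hAD i l.
rewrite -(@S_idr _ (B i) l) -hAD.
rewrite (@S_ext _ _ (fun j => Cmul (B i j) (Ssum (fun k => Cmul (A j k) (D k l))))); last by move=> j; rewrite matmulE.
rewrite S_assoc -(@S_idl _ (fun k => D k l) i) -hBA.
by apply: S_ext => k; rewrite matmulE.
Qed.
Lemma peval_ext V (e1 e2 : V -> CC) e : (forall v, e1 v = e2 v) -> peval e1 e = peval e2 e.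
Proof. by move=> h; elim: e => //= [e1' -> e2' ->|e1' -> e2' ->]. Qed.
Lemma peval_ren V W (env : W -> CC) (h : V -> W) e : peval env (prename h e) = peval (fun v => env (h v)) e.
Proof. by elim: e => //= [e1' -> e2' ->|e1' -> e2' ->]. Qed.
Lemma prename_comp U V W (h1 : U -> V) (h2 : V -> W) e : prename h2 (prename h1 e) = prename (fun v => h2 (h1 v)) e.
Proof. by elim: e => //= [e1' -> e2' ->|e1' -> e2' ->]. Qed.
Lemma prename_ext V W (h1 h2 : V -> W) e : (forall v, h1 v = h2 v) -> prename h1 e = prename h2 e.
Proof. by move=> h; elim: e => //= [v|e1' -> e2' ->|e1' -> e2' ->]; rewrite ?h. Qed.
Lemma peval_conj V (env : V -> CC) e : peval (fun v => Cconj (env v)) e = Cconj (peval env e).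
Proof.
elim: e => //= [r|e1' -> e2' ->|e1' -> e2' ->].
- by rewrite /Cconj /RtoC /= Ropp_0.
- by rewrite /Cconj /Cadd /=; f_equal; ring.
- by rewrite /Cconj /Cmul /=; f_equal; ring.
Qed.
Lemma pderiv_ren (h : nat -> nat) (hi : injective h) e j :
  pderiv (prename h e) (h j) = prename h (pderiv e j).
Proof. by elim: e => //= [v|e1' -> e2' ->|e1' -> e2' ->]; rewrite ?(inj_eq hi). Qed.

Definition swr (k l r : nat) : nat :=
  if (r < k)%N then r else if (r < k + l)%N then (r + l)%N
  else if (r < k + 2 * l)%N then (r - l)%N else r.
Definition sw (k l base q i : nat) : nat :=
  if (i < base)%N then i
  else (base + swr k l ((i - base) %/ q) * q + (i - base) %% q)%N.

Lemma swr_cases k l r : ((r < k)%N /\ swr k l r = r) \/ ((k <= r < k + l)%N /\ swr k l r = (r + l)%N) \/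
  ((k + l <= r < k + 2 * l)%N /\ swr k l r = (r - l)%N) \/ ((k + 2 * l <= r)%N /\ swr k l r = r).
Proof. rewrite /swr; do ! (case: ifP => ?); lia. Qed.

Lemma swrK k l r : swr k l (swr k l r) = r.
Proof. have := swr_cases k l r; have := swr_cases k l (swr k l r); lia. Qed.

Lemma sw_block k l base q s t : (t < q)%N ->
  sw k l base q (base + s * q + t) = (base + swr k l s * q + t)%N.
Proof.
move=> tq; have q0 : (0 < q)%N by lia.
rewrite /sw ifN; last by lia.
have -> : (base + s * q + t - base = s * q + t)%N by lia.
by rewrite divnMDl // modnMDl divn_small // modn_small // addn0.
Qed.

Lemma sw_dec base q i : (base <= i)%N -> i = (base + ((i - base) %/ q) * q + (i - base) %% q)%N.
Proof. move=> h; rewrite -addnA -divn_eq; lia. Qed.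

Lemma sw_q0 k l base i : sw k l base 0 i = i.
Proof. rewrite /sw; case: ifP => // h; rewrite divn0 modn0 muln0 addn0; lia. Qed.

Lemma swK k l base q i : sw k l base q (sw k l base q i) = i.
Proof.
case: (ltnP i base) => hi; first by rewrite /sw hi hi.
case: (posnP q) => [q0|qp].
  by rewrite q0 !sw_q0.
rewrite {2}/sw ltnNge hi /= sw_block ?ltn_mod // swrK -sw_dec //.
Qed.

Lemma sw_inj k l base q : injective (sw k l base q).
Proof. exact: (can_inj (swK k l base q)). Qed.

Lemma swr_lt k l r : (r < k + 2 * l)%N -> (swr k l r < k + 2 * l)%N.
Proof. have := swr_cases k l r; lia. Qed.

Lemma sw_lt k l base q i : (i < base + (k + 2 * l) * q)%N -> (sw k l base q i < base + (k + 2 * l) * q)%N.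
Proof.
move=> h; case: (ltnP i base) => hi; first by rewrite /sw hi.
case: (posnP q) => [q0|qp]; first by move: h; rewrite q0 sw_q0.
rewrite {1}(@sw_dec base q i hi) sw_block ?ltn_mod //.
have hr : ((i - base) %/ q < k + 2 * l)%N by rewrite ltn_divLR //; lia.
have := @swr_lt k l _ hr; set s := swr _ _ _ => hs.
have : (s.+1 * q <= (k + 2 * l) * q)%N by rewrite leq_mul2r hs orbT.
have := ltn_mod (i - base) q; rewrite qp. lia.
Qed.

Lemma sw_ge k l base q i : (base + (k + 2 * l) * q <= i)%N -> sw k l base q i = i.
Proof.
move=> h; case: (posnP q) => [q0|qp]; first by rewrite q0 sw_q0.
rewrite /sw ifN; last by lia.
have hr : (k + 2 * l <= (i - base) %/ q)%N by rewrite leq_divRL //; lia.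
rewrite {1}/swr !ifN; [|lia..].
rewrite -addnA -divn_eq; lia.
Qed.

Lemma sw_blockren k l m q r (v : 'I_(m + q)) :
  sw k l m q (blockren m q r v) = blockren m q (swr k l r) v.
Proof.
rewrite /blockren; case: ifP => hv; first by rewrite /sw hv.
apply: sw_block; have := ltn_ord v; lia.
Qed.
Section Main.
Variables (m k l q u w : nat) (hum : (u <= m)%N)
  (hdim : (m + (k + 2 * l) * q)%N = (u + (k + 2 * l) * w)%N)
  (g : 'I_u -> pexpr 'I_m) (p : 'I_w -> pexpr 'I_(m + q)).

Notation N := (m + (k + 2 * l) * q)%N.

Definition Gnat (o : nat) : pexpr nat :=
    match (insub o : option 'I_u) with
    | Some o' => prename (fun v : 'I_m => nat_of_ord v) (g o')
    | None =>
        let o1 := (o - u)%N in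
        match (insub (o1 %% w)%N : option 'I_w) with
        | Some j => prename (blockren m q (o1 %/ w)%N) (p j)
        | None => PConst 0%R
        end
    end.

Lemma fF_G (o : 'I_N) : fF m k l q u w g p o = Gnat o.
Proof. by []. Qed.

Lemma Gnat_block s t : (t < w)%N -> Gnat (u + s * w + t) =
  match (insub t : option 'I_w) with
  | Some j => prename (blockren m q s) (p j)
  | None => PConst 0%R end.
Proof.
move=> tw; rewrite /Gnat insubN; last by rewrite -leqNgt; lia.
have -> : (u + s * w + t - u = s * w + t)%N by lia.
by rewrite divnMDl ?modnMDl ?divn_small ?modn_small ?addn0 //; lia.
Qed.

Lemma G_sw o : Gnat (sw k l u w o) = prename (sw k l m q) (Gnat o).
Proof.
case: (ltnP o u) => hou.
  have -> : sw k l u w o = o by rewrite /sw hou.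
  rewrite /Gnat; case: insubP => [o' _ _|]; last by rewrite hou.
  rewrite prename_comp; apply: prename_ext => v.
  by rewrite /sw (ltn_ord v).
case: (posnP w) => [w0|wp].
  have Gw0 : forall o', (u <= o')%N -> Gnat o' = PConst 0%R.
    move=> o' ho'; rewrite /Gnat insubN; last by rewrite -leqNgt.
    by case: insubP => // j; move: (ltn_ord j); rewrite {2}w0.
  rewrite w0 sw_q0 Gw0 // Gw0 //.
rewrite [in RHS](@sw_dec u w o hou) {1}(@sw_dec u w o hou) sw_block ?ltn_mod //.
rewrite !Gnat_block ?ltn_mod //.
case: insubP => // j _ _; rewrite prename_comp; apply: prename_ext => v.
by rewrite sw_blockren.
Qed.

Lemma Plt (i : 'I_N) : (sw k l m q i < N)%N.
Proof. exact: sw_lt. Qed.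
Lemma Qlt (i : 'I_N) : (sw k l u w i < N)%N.
Proof. have h := ltn_ord i; move: (nat_of_ord i) h => i'; rewrite hdim => h; exact: sw_lt. Qed.
Definition P (i : 'I_N) : 'I_N := Ordinal (Plt i).
Definition Q (i : 'I_N) : 'I_N := Ordinal (Qlt i).
Lemma PK i : P (P i) = i. Proof. by apply: val_inj; rewrite /= swK. Qed.
Lemma QK i : Q (Q i) = i. Proof. by apply: val_inj; rewrite /= swK. Qed.
Lemma P_inj : injective P. Proof. exact: (can_inj PK). Qed.
Lemma Q_inj : injective Q. Proof. exact: (can_inj QK). Qed.

Definition fixP (x : 'I_N -> CC) := forall j, x (P j) = Cconj (x j).

Lemma extE (x : 'I_N -> CC) (o : 'I_N) : ext x o = x o.
Proof. by rewrite /ext valK. Qed.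

Lemma ext_sw x : fixP x -> forall i, ext x (sw k l m q i) = Cconj (ext x i).
Proof.
move=> hx i; case: (ltnP i N) => hi.
  have -> : i = nat_of_ord (Ordinal hi) by [].
  have -> : sw k l m q (Ordinal hi) = nat_of_ord (P (Ordinal hi)) by [].
  by rewrite !extE hx.
rewrite sw_ge // /ext insubN ?Cconj0 //; by rewrite -leqNgt.
Qed.

Notation F := (fF m k l q u w g p).

Lemma pm_eval_Q x : fixP x -> forall i, pm_eval F x (Q i) = Cconj (pm_eval F x i).
Proof.
move=> hx i; rewrite /pm_eval !fF_G /= G_sw peval_ren -peval_conj.
by apply: peval_ext => v; rewrite ext_sw.
Qed.

Lemma jac_QP x : fixP x -> forall i j, jac F x (Q i) (P j) = Cconj (jac F x i j).
Proof.
move=> hx i j; rewrite /jac !fF_G /= G_sw pderiv_ren; last exact: sw_inj.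
rewrite peval_ren -peval_conj.
by apply: peval_ext => v; rewrite ext_sw.
Qed.

Lemma mvE (A : 'I_N -> 'I_N -> CC) v i : mv A v i = Ssum (fun j => Cmul (A i j) (v j)).
Proof. by rewrite /mv Csum_S. Qed.

Lemma newton_fix x : fixP x -> fixP (newton F x).
Proof.
move=> hx; rewrite /newton; case: excluded_middle_informative => hinv //.
set B := epsilon _ _.
have [hJB hBJ] : is_inverse (jac F x) B by apply: epsilon_spec.
set J := jac F x in hJB hBJ *.
have hJ : forall a b, J a b = Cconj (J (Q a) (P b)).
  by move=> a b; rewrite /J jac_QP // CconjK.
pose D a b := Cconj (B (P a) (Q b)).
have hJD : matmul J D = idmat N.
  apply: functional_extensionality => a; apply: functional_extensionality => c.
  rewrite matmulE (@S_ext _ _ (fun b => Cconj (Cmul (J (Q a) (P b)) (B (P b) (Q c))))); last first.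
    by move=> b; rewrite CconjM -hJ.
  rewrite -S_conj -(@S_reindex _ P (fun b => Cmul (J (Q a) b) (B b (Q c))) P_inj).
  rewrite -matmulE hJB /idmat (inj_eq Q_inj).
  by case: (a == c); rewrite ?Cconj1 ?Cconj0.
have hBD := @inv_unique _ _ _ _ hBJ hJD.
move=> i /=.
rewrite CconjB mvE hx; congr Csub.
rewrite (@S_ext _ _ (fun j => Cconj (Cmul (B i (Q j)) (pm_eval F x (Q j))))); last first.
  move=> j; rewrite hBD /D PK CconjM; congr Cmul.
  by rewrite pm_eval_Q // CconjK.
rewrite -S_conj mvE; congr Cconj.
rewrite [RHS](@S_reindex _ Q _ Q_inj) //.
Qed.

Lemma assemble_block a b c s t : (t < q)%N -> assemble m k l q a b c (m + s * q + t) =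
  if (s < k)%N then RtoC (b s t) else if (s < k + l)%N then c (s - k)%N t else Cconj (c (s - k - l)%N t).
Proof.
move=> tq; rewrite /assemble ifN; last by lia.
have -> : (m + s * q + t - m = s * q + t)%N by lia.
by rewrite divnMDl ?modnMDl ?divn_small ?modn_small ?addn0 //; lia.
Qed.

Lemma Vset_fix x : Vset m k l q x -> fixP x.
Proof.
move=> [a [b [c hx]]] j; rewrite !hx /=.
have hi := ltn_ord j; move: (nat_of_ord j) hi => i hi.
case: (ltnP i m) => hm; first by rewrite /sw hm /assemble hm CconjR.
case: (posnP q) => [q0|qp]; first by move: hi; rewrite q0 muln0 addn0; lia.
have hi' := @sw_dec m q i hm.
set r := ((i - m) %/ q)%N in hi'; set t := ((i - m) %% q)%N in hi'.
have tq : (t < q)%N by rewrite /t ltn_mod.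
have hr : (r < k + 2 * l)%N by rewrite /r ltn_divLR //; lia.
rewrite hi' sw_block // !assemble_block //.
case: (swr_cases k l r) => [[h1 ->]|[[h1 ->]|[[h1 ->]|[h1 _]]]].
- by rewrite h1 CconjR.
- have -> : (r + l < k)%N = false by lia.
  have -> : (r + l < k + l)%N = false by lia.
  have -> : (r < k)%N = false by lia.
  have -> : (r < k + l)%N = true by lia.
  by have -> : (r + l - k - l = r - k)%N by lia.
- have -> : (r - l < k)%N = false by lia.
  have -> : (r - l < k + l)%N = true by lia.
  have -> : (r < k)%N = false by lia.
  have -> : (r < k + l)%N = false by lia.
  by rewrite CconjK; have -> : (r - l - k = r - k - l)%N by lia.
- lia.
Qed.

Lemma real_conj (z : CC) : z = Cconj z -> z = RtoC (fst z).
Proof. case: z => x y [] h; rewrite /RtoC /=; f_equal; lra. Qed.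

Lemma fix_Vset x : fixP x -> Vset m k l q x.
Proof.
move=> hx; have H := @ext_sw _ hx.
exists (fun i => fst (ext x i)), (fun r j => fst (ext x (m + r * q + j)%N)),
  (fun s j => ext x (m + (k + s) * q + j)%N).
move=> i; rewrite -extE.
have hi := ltn_ord i; move: (nat_of_ord i) hi => iv hi.
case: (ltnP iv m) => hm.
  rewrite /assemble hm; apply: real_conj; rewrite -H; by rewrite /sw hm.
case: (posnP q) => [q0|qp]; first by exfalso; move: hi; rewrite q0 muln0 addn0; lia.
have hi' := @sw_dec m q iv hm.
set r := ((iv - m) %/ q)%N in hi'; set t := ((iv - m) %% q)%N in hi'.
have tq : (t < q)%N by rewrite /t ltn_mod.
have hr : (r < k + 2 * l)%N by rewrite /r ltn_divLR //; lia.
rewrite hi' assemble_block //.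
case: (swr_cases k l r) => [[h1 h2]|[[h1 h2]|[[h1 h2]|[h1 _]]]].
- rewrite h1; apply: real_conj; by rewrite -H sw_block // h2.
- have -> : (r < k)%N = false by lia.
  have -> : (r < k + l)%N = true by lia.
  by have -> : (k + (r - k) = r)%N by lia.
- have -> : (r < k)%N = false by lia.
  have -> : (r < k + l)%N = false by lia.
  have -> : (k + (r - k - l) = swr k l r)%N by lia.
  by rewrite -sw_block // H CconjK.
- lia.
Qed.

Lemma Cnorm_bounds (z : CC) e : (Cnorm z < e)%R -> (Rabs (fst z) < e)%R /\ (Rabs (snd z) < e)%R.
Proof.
case: z => x y /= h; rewrite /Cnorm /= in h; split.
- rewrite -sqrt_Rsqr_abs; apply: Rle_lt_trans h; apply: sqrt_le_1_alt; rewrite /Rsqr; nra.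
- rewrite -sqrt_Rsqr_abs; apply: Rle_lt_trans h; apply: sqrt_le_1_alt; rewrite /Rsqr; nra.
Qed.

Lemma close_eq (x y : R) : (forall eps, (0 < eps)%R -> (Rabs (x - y) < eps)%R) -> x = y.
Proof.
move=> h; case: (Req_dec x y) => // hne.
have hp : (0 < Rabs (x - y))%R by apply: Rabs_pos_lt; lra.
have := h _ hp; lra.
Qed.

Lemma fix_closed (s : nat -> 'I_N -> CC) L : (forall t, fixP (s t)) -> converges s L -> fixP L.
Proof.
move=> hs hc j; apply: Ceq; apply: close_eq => eps he.
  have [N0 hN] := hc (eps / 2)%R ltac:(lra).
  have h1 := hN N0 (leqnn _) (P j); have h2 := hN N0 (leqnn _) j.
  rewrite hs in h1.
  have [a1 _] := @Cnorm_bounds _ _ h1; have [a2 _] := @Cnorm_bounds _ _ h2.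
  move: a1 a2; rewrite /Cconj /Csub /Cadd /Copp /=.
  move=> /Rabs_def2 [? ?] /Rabs_def2 [? ?]; apply: Rabs_def1; lra.
have [N0 hN] := hc (eps / 2)%R ltac:(lra).
have h1 := hN N0 (leqnn _) (P j); have h2 := hN N0 (leqnn _) j.
rewrite hs in h1.
have [_ a1] := @Cnorm_bounds _ _ h1; have [_ a2] := @Cnorm_bounds _ _ h2.
move: a1 a2; rewrite /Cconj /Csub /Cadd /Copp /=.
move=> /Rabs_def2 [? ?] /Rabs_def2 [? ?]; apply: Rabs_def1; lra.
Qed.

End Main.

Theorem theorem2 (m k l q u w : nat) (hum : (u <= m)%N)
  (hdim : (m + (k + 2 * l) * q)%N = (u + (k + 2 * l) * w)%N)
  (g : 'I_u -> pexpr 'I_m) (p : 'I_w -> pexpr 'I_(m + q)) :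
  newton_invariant (fF m k l q u w g p) (Vset m k l q).
Proof.
have NF : forall v, Vset m k l q v -> Vset m k l q (newton (fF m k l q u w g p) v).
  move=> v hv; apply: (@fix_Vset m k l q u w hum hdim).
  apply: (@newton_fix m k l q u w hum hdim); exact: (@Vset_fix m k l q u w hum hdim).
split => // v L hv hc.
apply: (@fix_Vset m k l q u w hum hdim); apply: (@fix_closed m k l q _ _ _ hc) => t.
apply: (@Vset_fix m k l q u w hum hdim); elim: t => [|t IH] //=.
exact: NF.
Qed.
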